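(* Let $X$ be a Grothendieck Banach space and let $M$ be a closed subspace of $X$ such that the quotient $X/M$ is separable. Then $M$ is a Grothendieck space.
   Context: A Banach space $Z$ is called a Grothendieck space if every $\sigma(Z^*,Z)$-convergent (i.e. weak$^*$-convergent) sequence in the dual $Z^*$ is $\sigma(Z^*,Z^{**})$-convergent (i.e. weakly convergent). *)

(* Defs.v *)
From HB Require Import structures.
From mathcomp Require Import all_boot all_order all_algebra.
From mathcomp Require Import all_classical all_reals all_analysis.
Set Implicit Arguments. Unset Strict Implicit. Unset Printing Implicit Defensive.
Import Order.TTheory GRing.Theory Num.Theory.
Import numFieldNormedType.Exports.
Local Open Scope classical_set_scope.
Local Open Scope ring_scope.

Section Dual.
Variables (R : realType) (Z : normedModType R).

Definition fbounded (f : Z -> R) (K : R) := forall z, `|f z| <= K * `|z|.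

Definition in_dual (f : Z -> R) : Prop :=
  (forall (a : R) (x y : Z), f (a *: x + y) = a * f x + f y) /\
  exists K : R, fbounded f K.

(* elements of the bidual Z^** : bounded linear functionals on Z^*,
   where Z^* carries the operator norm *)
Definition in_bidual (Phi : (Z -> R) -> R) : Prop :=
  (forall (a : R) (f g : Z -> R), in_dual f -> in_dual g ->
     Phi (fun z => a * f z + g z) = a * Phi f + Phi g) /\
  exists C : R, forall (f : Z -> R) (K : R),
     in_dual f -> 0 <= K -> fbounded f K -> `|Phi f| <= C * K.

Definition weakstar_cvg (F : nat -> Z -> R) (f : Z -> R) : Prop :=
  forall z, (fun n => F n z) @ \oo --> f z.

Definition weak_cvg (F : nat -> Z -> R) (f : Z -> R) : Prop :=
  forall Phi, in_bidual Phi -> (fun n => Phi (F n)) @ \oo --> Phi f.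

Definition Grothendieck : Prop :=
  forall F : nat -> Z -> R, (forall n, in_dual (F n)) ->
    (exists f, in_dual f /\ weakstar_cvg F f) ->
    exists g, in_dual g /\ weak_cvg F g.
End Dual.

(* The quotient X / J(M) is separable: some countable family D is dense in the
   quotient norm ||x + J(M)|| = inf_m ||x - J m||. *)
Definition quotient_separable (R : realType) (X M : normedModType R)
    (J : M -> X) : Prop :=
  exists D : nat -> X, forall (x : X) (e : R), 0 < e ->
    exists (n : nat) (m : M), `|x - D n - J m| < e.

(* Main.v *)
Require Import Defs.
From HB Require Import structures.
From mathcomp Require Import all_boot all_order all_algebra.
From mathcomp Require Import all_classical all_reals all_analysis.
From mathcomp Require Import ring lra.
Import Order.TTheory GRing.Theory Num.Theory.
Import numFieldNormedType.Exports.
Local Open Scope classical_set_scope.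
Local Open Scope ring_scope.


Section HBsec.
Variables (R : realType) (X M : normedModType R) (J : {linear M -> X}).
Hypothesis Jiso : forall m, `|J m| = `|m|.
Variables (f : M -> R) (K : R).
Hypothesis flin : forall a x y, f (a *: x + y) = a * f x + f y.
Hypothesis fbd : forall m, `|f m| <= K * `|m|.
Hypothesis K0 : 0 <= K.

Definition Qg (G : set (X * R)) :=
  [/\ (forall x r s, G (x,r) -> G (x,s) -> r = s),
      (forall a x y r s, G (x,r) -> G (y,s) -> G (a *: x + y, a * r + s)) &
      (forall x r, G (x,r) -> r <= K * `|x|)].

Let G0 : set (X * R) := [set p | exists m, p = (J m, f m)].

Let f0 : f 0 = 0.
Proof.
have := flin 1 0 0; rewrite scale1r addr0 mul1r.
move=> /(congr1 (fun t => t - f 0)); rewrite subrr addrK => H; by rewrite -H.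
Qed.

Let QG0 : Qg G0.
Proof.
split.
- move=> x r s [m [-> ->]] [m' [Em ->]].
  have -> : m = m'.
    apply/eqP; rewrite -subr_eq0 -normr_eq0 -Jiso raddfB (_ : J m - J m' = 0) ?normr0 //.
    by apply/eqP; rewrite subr_eq0; apply/eqP; exact: Em.
  by [].
- move=> a x y r s [m [-> ->]] [m' [-> ->]]; exists (a *: m + m').
  by rewrite linearP flin.
- move=> x r [m [-> ->]]; rewrite Jiso; exact: le_trans (ler_norm _) (fbd m).
Qed.

Let two_points (F : set (set (X * R))) :
  F `<=` (fun A => Qg (G0 `|` A)) -> total_on F subset ->
  forall p q, (G0 `|` \bigcup_(A in F) A) p -> (G0 `|` \bigcup_(A in F) A) q ->
  exists H, [/\ Qg H, H `<=` G0 `|` \bigcup_(A in F) A, H p & H q].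
Proof.
move=> FQ Ftot p q [Hp|[A FA Ap]] [Hq|[B FB Bq]].
- exists G0; split => //; exact: subsetUl.
- exists (G0 `|` B); split; [exact: FQ|idtac|by left|by right].
  by move=> z [?|?]; [left|right; exists B].
- exists (G0 `|` A); split; [exact: FQ|idtac|by right|by left].
  by move=> z [?|?]; [left|right; exists A].
- have [AB|BA] := Ftot _ _ FA FB.
  + exists (G0 `|` B); split; [exact: FQ|idtac|by right; apply: AB|by right].
    by move=> z [?|?]; [left|right; exists B].
  + exists (G0 `|` A); split; [exact: FQ|idtac|by right|by right; apply: BA].
    by move=> z [?|?]; [left|right; exists A].
Qed.

Let chain (F : set (set (X * R))) :
  F `<=` (fun A => Qg (G0 `|` A)) -> total_on F subset ->
  Qg (G0 `|` \bigcup_(A in F) A).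
Proof.
move=> FQ Ftot; split.
- move=> x r s Hr Hs; have [H [[Ha _ _] _ Hp Hq]] := two_points _ FQ Ftot _ _ Hr Hs.
  exact: Ha Hp Hq.
- move=> a x y r s Hr Hs; have [H [[_ Hb _] HU Hp Hq]] := two_points _ FQ Ftot _ _ Hr Hs.
  exact/HU/Hb.
- move=> x r Hr; have [H [[_ _ Hc] _ Hp _]] := two_points _ FQ Ftot _ _ Hr Hr.
  exact: Hc Hp.
Qed.

Section Ext.
Variable H : set (X * R).
Hypothesis QH : Qg H.
Hypothesis H00 : H (0, 0).
Variable x : X.
Hypothesis nx : ~ (exists r, H (x, r)).

Let Hscal (a : R) [y : X] [s : R] : H (y, s) -> H (a *: y, a * s).
Proof. by case: QH => _ Hb _ Hy; have := Hb a _ _ _ _ Hy H00; rewrite addr0 addr0. Qed.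

Let Hadd [y : X] [s : R] [y' : X] [s' : R] : H (y, s) -> H (y', s') -> H (y + y', s + s').
Proof. by case: QH => _ Hb _ Hy Hy'; have := Hb 1 _ _ _ _ Hy Hy'; rewrite scale1r mul1r. Qed.

Let key [y : X] [s : R] [y' : X] [s' : R] : H (y, s) -> H (y', s') -> s' - K * `|y' - x| <= K * `|y + x| - s.
Proof.
move=> Hy Hy'; have := Hadd Hy Hy'; case: QH => _ _ Hc /Hc Hle.
have : `|y + y'| <= `|y + x| + `|y' - x|.
  by have := ler_normD (y + x) (y' - x); rewrite addrACA subrr addr0.
move=> /(ler_wpM2l K0) => H2.
rewrite mulrDr in H2; lra.
Qed.

Definition Sx := [set v | exists y s, H (y, s) /\ v = s - K * `|y - x|].

Let Sx0 : Sx !=set0.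
Proof. by exists (0 - K * `|0 - x|); exists 0, 0. Qed.

Let Sxub : ubound Sx (K * `|0 + x| - 0).
Proof. by move=> v [y [s [Hy ->]]]; apply: key. Qed.

Definition cx := sup Sx.

Let c_ge [y : X] [s : R] : H (y, s) -> s - K * `|y - x| <= cx.
Proof.
move=> Hy; apply: (sup_upper_bound (conj Sx0 (ex_intro _ _ Sxub))).
by exists y, s.
Qed.

Let c_le [y : X] [s : R] : H (y, s) -> cx <= K * `|y + x| - s.
Proof.
move=> Hy; apply: ge_sup => // v [y' [s' [Hy' ->]]]; exact: key.
Qed.

Definition Hext := [set p | exists y s t, H (y, s) /\ p = (y + t *: x, s + t * cx)].

Lemma Hext_sub : H `<=` Hext.
Proof. by move=> [y s] Hy; exists y, s, 0; rewrite scale0r mul0r !addr0. Qed.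

Lemma Hext_x : Hext (x, cx).
Proof. by exists 0, 0, 1; rewrite scale1r mul1r !add0r. Qed.

Lemma Q_Hext : Qg Hext.
Proof.
case: QH => Ha Hb Hc; split.
- move=> z r r' [y [s [t [Hy [Ez ->]]]]] [y' [s' [t' [Hy' [Ez' ->]]]]].
  have E : y + t *: x = y' + t' *: x by rewrite -Ez -Ez'.
  have [tt'|ntt'] := eqVneq t t'.
    subst t'; have Eyy : y = y' by move: E => /addIr.
    by subst y'; rewrite (Ha _ _ _ Hy Hy').
  exfalso; apply: nx.
  have E2 : (t - t') *: x = y' - y.
    by rewrite scalerBl -[y' in RHS](addrK (t' *: x)) -E addrAC [y + _]addrC addrK.
  have Hd : H (y' - y, s' - s).
    by have := Hadd Hy' (Hscal (-1) Hy); rewrite scaleN1r mulN1r.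
  exists ((t - t')^-1 * (s' - s)).
  have := Hscal ((t - t')^-1) Hd; rewrite -E2 scalerA mulVf ?scale1r //.
  by rewrite subr_eq0.
- move=> a z z' r r' [y [s [t [Hy [-> ->]]]]] [y' [s' [t' [Hy' [-> ->]]]]].
  exists (a *: y + y'), (a * s + s'), (a * t + t'); split; first exact: Hb.
  congr pair; last by ring.
  by rewrite scalerDr scalerDl scalerA addrACA.
- move=> z r [y [s [t [Hy [-> ->]]]]].
  have [t0|t0|->] := ltgtP t 0; last by rewrite scale0r mul0r !addr0; exact: Hc.
  + set u := - t.
    have u0 : 0 < u by rewrite /u oppr_gt0.
    have -> : t = - u by rewrite /u opprK.
    have hc := c_ge (Hscal (u^-1) Hy).
    have En : `|y + - u *: x| = u * `|u^-1 *: y - x|.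
      transitivity (`|u| * `|u^-1 *: y - x|); last by rewrite gtr0_norm.
      by rewrite -normrZ scalerBr scalerA mulfV ?gt_eqF // scale1r scaleNr.
    rewrite En.
    have -> : s = u * (u^-1 * s) by rewrite mulrA mulfV ?gt_eqF // mul1r.
    move: hc; set N := `|_ - x|; set s1 := u^-1 * s => hc.
    nra.
  + have hc := c_le (Hscal (t^-1) Hy).
    have En : `|y + t *: x| = t * `|t^-1 *: y + x|.
      transitivity (`|t| * `|t^-1 *: y + x|); last by rewrite gtr0_norm.
      by rewrite -normrZ scalerDr scalerA mulfV ?gt_eqF // scale1r.
    rewrite En.
    have -> : s = t * (t^-1 * s) by rewrite mulrA mulfV ?gt_eqF // mul1r.
    move: hc; set N := `|_ + x|; set s1 := t^-1 * s => hc.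
    nra.
Qed.
End Ext.

Lemma hahn_banach : exists g : X -> R,
  [/\ (forall a x y, g (a *: x + y) = a * g x + g y),
      (forall x, `|g x| <= K * `|x|) &
      (forall m, g (J m) = f m)].
Proof.
have [A [PA Amax]] := Zorn_bigcup chain.
set H := G0 `|` A.
have H00 : H (0, 0) by left; exists 0; rewrite raddf0 f0.
have tot : forall x, exists r, H (x, r).
  move=> x; apply: contrapT => nx.
  apply: (Amax (A `|` Hext H x)).
    split; first exact: subsetUl.
    move=> /(_ (x, cx H x) (or_intror (Hext_x H H00 x))) Ax.
    by apply: nx; exists (cx H x); right.
  have -> : G0 `|` (A `|` Hext H x) = Hext H x.
    by rewrite setUA; apply: setUidr; exact: Hext_sub.
  exact: (Q_Hext _ PA H00 _ nx).
pose g x := sval (cid (tot x)).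
have gP x : H (x, g x) by rewrite /g; case: cid.
case: PA => Ha Hb Hc.
have uq x r : H (x, r) -> g x = r by move=> Hr; exact: Ha (gP x) Hr.
exists g; split.
- by move=> a x y; apply: uq; apply: Hb; apply: gP.
- move=> x; rewrite ler_norml; apply/andP; split; last exact: Hc (gP x).
  have := Hb (-1) x 0 _ _ (gP x) H00; rewrite addr0 addr0 scaleN1r mulN1r.
  move=> /Hc; rewrite normrN lerNl; by [].
- by move=> m; apply: uq; left; exists m.
Qed.
End HBsec.


Section Seqs.
Variable R : realType.

Definition sinc (f : nat -> nat) := forall i j, (i < j)%N -> (f i < f j)%N.

Lemma sinc_ge f : sinc f -> forall n, (n <= f n)%N.
Proof.
move=> hf; elim=> [//|n IH]; apply: leq_ltn_trans IH _; exact: hf.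
Qed.

Arguments sinc_ge [f].
Lemma sinc_comp f g : sinc f -> sinc g -> sinc (f \o g).
Proof. by move=> hf hg i j /hg /hf. Qed.

Arguments sinc_comp [f g].
Lemma sinc_step f : (forall n, (f n < f n.+1)%N) -> sinc f.
Proof.
move=> h i j; apply: (@homo_ltn _ f (fun x y => (x < y)%N)) => // y x z.
exact: ltn_trans.
Qed.

Lemma bw_abs (u : nat -> R) B : (forall n, `|u n| <= B) ->
  exists phi, sinc phi /\ cvgn (u \o phi).
Proof.
move=> hB.
have bu : bounded_fun u.
  rewrite /bounded_near; near=> M => n _ /=; apply: le_trans (hB n) _.
  by near: M; apply: nbhs_pinfty_ge; rewrite num_real.
have [phi hphi cphi] := bolzano_weierstrass bu.
exists phi; split => // i j ij.
have E : (phi j <= phi i)%N = (j <= i)%N by exact: hphi.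
by rewrite ltnNge E -ltnNge.
Unshelve. all: by end_near. Qed.

Lemma cvg_epsP (u : nat -> R) l :
  u @ \oo --> l <-> forall e : R, 0 < e -> exists N, forall n, (N <= n)%N -> `|l - u n| < e.
Proof.
rewrite cvgrPdist_lt; split => H e /H.
  by move=> [N _ HN]; exists N => n /HN.
by move=> [N HN]; exists N => // n /HN.
Qed.

Lemma cauchy_cvgR (u : nat -> R) :
  (forall e : R, 0 < e -> exists N, forall i j, (N <= i)%N -> (N <= j)%N -> `|u i - u j| < e) ->
  cvgn u.
Proof.
move=> H; apply/cauchy_cvgP; apply/cauchy_ballP => e /H [N HN]; near_simpl.
exists ([set n | (N <= n)%N], [set n | (N<=n)%N]); first by split; exists N.
by move=> [i j] [/= Hi Hj]; rewrite -ball_normE /=; apply: HN.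
Qed.

Lemma cvg_lim_eps (u : nat -> R) : cvgn u ->
  forall e : R, 0 < e -> exists N, forall n, (N <= n)%N -> `|limn u - u n| < e.
Proof. by move=> /cvg_ex [l Hl]; rewrite (cvg_lim _ Hl) //; apply/cvg_epsP. Qed.

Lemma cvg_cauchyR (u : nat -> R) : cvgn u ->
  forall e : R, 0 < e -> exists N, forall i j, (N <= i)%N -> (N <= j)%N -> `|u i - u j| < e.
Proof.
move=> cu e e0; have [N HN] := @cvg_lim_eps u cu _ (divr_gt0 e0 (ltr0n R 2)).
exists N => i j /HN hi /HN hj.
have := ler_normD (limn u - u j) (u i - limn u).
rewrite addrC addrA subrK (distrC (u i)) => h.
apply: le_lt_trans h _; rewrite [`|u i - _|]distrC; lra.
Qed.

Lemma subseq_cvg (u : nat -> R) (g : nat -> nat) l :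
  u @ \oo --> (l : R) -> (forall n, (n <= g n)%N) -> (u \o g) @ \oo --> l.
Proof.
move=> /cvg_epsP cu hg; apply/cvg_epsP => e /cu [N HN].
exists N => n Nn; apply: HN; exact: leq_trans Nn (hg n).
Qed.

Section Diag.
Variable a : nat -> nat -> R.
Hypothesis abnd : forall k, exists B, forall n, `|a n k| <= B.

Let stepP (s : nat -> nat) k : exists phi, sinc phi /\ cvgn ((fun n => a (s n) k) \o phi).
Proof. by have [B hB] := abnd k; apply: (@bw_abs _ B) => n; apply: hB. Qed.

Let step (s : nat -> nat) k : nat -> nat := sval (cid (stepP s k)).
Let stepS s k : sinc (step s k).
Proof. by rewrite /step; case: cid => ? []. Qed.
Let stepC s k : cvgn ((fun n => a (s n) k) \o step s k).
Proof. by rewrite /step; case: cid => ? []. Qed.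

Let sigma : nat -> nat -> nat := fix sg k :=
  match k with 0 => step id 0 | k'.+1 => sg k' \o step (sg k') k'.+1 end.

Let sigmaS k : sinc (sigma k).
Proof. elim: k => [|k IH] /=; [exact: stepS|idtac].
move=> i j ij /=; apply: IH; exact: stepS.
Qed.

Let sigmaC k : cvgn (fun n => a (sigma k n) k).
Proof. case: k => [|k] /=; [exact: (stepC id 0)|exact: (stepC (sigma k) k.+1)]. Qed.

Let sigma_sub k j : (k <= j)%N -> exists tau, (forall i, (i <= tau i)%N) /\ sigma j = sigma k \o tau.
Proof.
elim: j => [|j IH].
  by rewrite leqn0 => /eqP ->; exists id.
rewrite leq_eqVlt => /orP [/eqP ->|]; first by exists id.
rewrite ltnS => /IH [tau [htau Ej]].
exists (tau \o step (sigma j) j.+1); split.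
  by move=> i /=; exact: (leq_trans (sinc_ge (stepS (sigma j) j.+1) i) (htau _)).
by apply/funext => i; rewrite /= {1}Ej.
Qed.

Lemma diagonal : exists psi, sinc psi /\ forall k, cvgn (fun j => a (psi j) k).
Proof.
exists (fun j => sigma j j); split.
  apply: sinc_step => n /=.
  apply: sigmaS; apply: leq_trans (sinc_ge (stepS _ _) n.+1); exact: ltnSn.
move=> k; apply/cvg_ex; exists (limn (fun n => a (sigma k n) k)).
have /cvg_lim_eps cl := sigmaC k.
apply/cvg_epsP => e /cl [N HN].
exists (maxn N k) => j; rewrite geq_max => /andP [Nj kj].
have [tau [htau Ej]] := sigma_sub _ _ kj.
rewrite Ej /=; apply: HN; exact: leq_trans Nj (htau j).
Qed.
End Diag.
End Seqs.


Section Lin.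
Variables (R : realType) (V : normedModType R) (g : V -> R).
Hypothesis glin : forall a x y, g (a *: x + y) = a * g x + g y.
Lemma lin0 : g 0 = 0.
Proof.
have := glin 1 0 0; rewrite scale1r addr0 mul1r.
move=> /(congr1 (fun t => t - g 0)); rewrite subrr addrK => H; by rewrite -H.
Qed.
Lemma linZ a x : g (a *: x) = a * g x.
Proof. by have := glin a x 0; rewrite addr0 lin0 addr0. Qed.
Lemma linD x y : g (x + y) = g x + g y.
Proof. by have := glin 1 x y; rewrite scale1r mul1r. Qed.
Lemma linN x : g (- x) = - g x.
Proof. by rewrite -scaleN1r linZ mulN1r. Qed.
Lemma linB x y : g (x - y) = g x - g y.
Proof. by rewrite linD linN. Qed.
End Lin.

Lemma ubp (R : realType) (M : completeNormedModType R) (F : nat -> M -> R) (f : M -> R) :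
  (forall n, in_dual (F n)) -> weakstar_cvg F f ->
  exists B, 0 <= B /\ forall n m, `|F n m| <= B * `|m|.
Proof.
move=> Fd Fc.
have BS := @Banach_Steinhauss R M R^o (range F).
have H1 : forall g, range F g -> bounded_fun_norm g /\ linear (g : M -> R^o).
  move=> _ [n _ <-]; have [Fl [K FK]] := Fd n; split.
    move=> r; exists (`|K| * `|r|) => x xr.
    apply: le_trans (FK x) _.
    apply: le_trans (ler_norm _) _; rewrite normrM normr_id.
    apply: ler_wpM2l => //; apply: le_trans xr (ler_norm _).
  move=> a u v; exact: Fl.
have H2 : pointwise_bounded (range F : set (M -> R^o)).
  move=> x.
  have : cvgn (fun n => F n x) by apply/cvg_ex; exists (f x); exact: Fc.
  move=> /cvg_seq_bounded [M0 [_ HM]].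
  exists (M0 + 1) => _ [n _ <-].
  have := HM (M0 + 1); rewrite ltrDl ltr01 => /(_ isT n I); by [].
have [Mb HMb] := BS H1 H2 1.
exists Mb.
  have lF n : forall a x y, F n (a *: x + y) = a * F n x + F n y by case: (Fd n).
  have Mb0 : 0 <= Mb.
    have := HMb (F 0) (ex_intro2 _ _ 0 I erefl) 0; rewrite normr0 ler01 lin0 ?normr0 => [/(_ isT)|]//.
  split => // n m.
  have [->|m0] := eqVneq m 0; first by rewrite lin0 // normr0 normr0 mulr0.
  have nm0 : 0 < `|m| by rewrite normr_gt0.
  have := HMb (F n) (ex_intro2 _ _ n I erefl) (`|m|^-1 *: m).
  rewrite normrZV ?unitfE ?gt_eqF // lexx linZ // normrM normrV ?unitfE ?gt_eqF // normr_id.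
  move=> /(_ isT); rewrite -ler_pdivlMl ?invr_gt0 // invrK mulrC; by [].
Qed.

Lemma tri4 (R : realType) (a b c a' b' c' : R) :
  `|(a + b + c) - (a' + b' + c')| <= `|a - a'| + `|b - b'| + `|c| + `|c'|.
Proof.
have -> : (a + b + c) - (a' + b' + c') = (a - a') + (b - b') + (c + - c') by ring.
apply: (le_trans (ler_normD _ _)); rewrite -[X in _ <= X]addrA.
apply: lerD; first exact: ler_normD.
by apply: (le_trans (ler_normD _ _)); rewrite normrN.
Qed.

Theorem proposition3p1 (R : realType) (X M : completeNormedModType R)
    (J : {linear M -> X}) (J_isometry : forall m : M, `|J m| = `|m|) :
  Grothendieck X -> quotient_separable J -> Grothendieck M.
Proof.
move=> GX [D HD] F Fd [f [fd Fc]].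
exists f; split => // Phi PhiB.
have [B [B0 FB]] := @ubp R M F f Fd Fc.
have ext n : exists g : X -> R, [/\ (forall a x y, g (a *: x + y) = a * g x + g y),
      (forall x, `|g x| <= B * `|x|) & (forall m, g (J m) = F n m)].
  have [Fl _] := Fd n.
  exact: (@hahn_banach R X M J J_isometry (F n) B Fl (FB n) B0).
pose G n := sval (cid (ext n)).
have [Gl GB GJ] : [/\ forall n a x y, G n (a *: x + y) = a * G n x + G n y,
   forall n x, `|G n x| <= B * `|x| & forall n m, G n (J m) = F n m].
  by split => n; rewrite /G; case: cid => g [].
apply: contrapT => ncvg.
have [e [e0 bad]] : exists e : R, 0 < e /\
    forall N, exists n, (N <= n)%N /\ e <= `|Phi f - Phi (F n)|.
  apply: contrapT => H; apply: ncvg; apply/cvg_epsP => e e0.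
  apply: contrapT => H2; apply: H; exists e; split => // N.
  apply: contrapT => H3; apply: H2; exists N => n Nn.
  rewrite ltNge; apply/negP => H4; apply: H3; exists n; split => //.
pose nxt N := sval (cid (bad N)).
have nxtP N : (N <= nxt N)%N /\ e <= `|Phi f - Phi (F (nxt N))|.
  by rewrite /nxt; case: cid.
pose phi := fix ph k := match k with 0 => nxt 0%N | k'.+1 => nxt (ph k').+1 end.
have phiS : sinc phi.
  by apply: sinc_step => n /=; exact: (proj1 (nxtP _)).
have phiB k : e <= `|Phi f - Phi (F (phi k))|.
  by case: k => [|k] /=; exact: (proj2 (nxtP _)).
have [|psi [psiS psiC]] := @diagonal R (fun n k => G (phi n) (D k)).
  by move=> k; exists (B * `|D k|) => n; exact: GB.
pose chi j := phi (psi j).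
have chiS : sinc chi by exact: sinc_comp.
have Fchi m : (fun j => F (chi j) m) @ \oo --> f m.
  exact: (@subseq_cvg R (fun n => F n m) chi (f m) (Fc m) (sinc_ge _ chiS)).
have Hc x : cvgn (fun j => G (chi j) x).
  apply: cauchy_cvgR => eps eps0.
  pose d := eps / (4 * (B + 1)).
  have d0 : 0 < d by rewrite /d divr_gt0 //; lra.
  have Bd : B * d <= eps / 4.
    have -> : eps / 4 = (B + 1) * d by rewrite /d; field; lra.
    nra.
  have [k [m hz]] := HD x d d0.
  set z := x - D k - J m in hz.
  have Ex j : G (chi j) x = G (chi j) (D k) + F (chi j) m + G (chi j) z.
    rewrite /z !(linB _ _ _ (Gl (chi j))) GJ; ring.
  have e4 : 0 < eps / 4 by rewrite divr_gt0.
  have [N1 HN1] := @cvg_cauchyR R _ (psiC k) _ e4.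
  have HN1' : forall i j, (N1 <= i)%N -> (N1 <= j)%N ->
    `|G (chi i) (D k) - G (chi j) (D k)| < eps / 4 := HN1.
  have [N2 HN2] : exists N, forall i j, (N <= i)%N -> (N <= j)%N ->
      `|F (chi i) m - F (chi j) m| < eps / 4.
    apply: (@cvg_cauchyR R _ _ _ e4); apply/cvg_ex; exists (f m); exact: Fchi.
  exists (maxn N1 N2) => i j; rewrite !geq_max => /andP[i1 i2] /andP[j1 j2].
  rewrite !Ex; apply: (le_lt_trans (tri4 _ _ _ _ _ _ _)).
  have := HN1' i j i1 j1; have := HN2 i j i2 j2.
  have := GB (chi i) z; have := GB (chi j) z.
  have : B * `|z| <= B * d by apply: ler_wpM2l => //; exact: ltW.
  lra.
pose g x := limn (fun j => G (chi j) x).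
have gc x : (fun j => G (chi j) x) @ \oo --> g x.
  by have /cvg_ex [l hl] := Hc x; rewrite /g (cvg_lim _ hl).
have gl a x y : g (a *: x + y) = a * g x + g y.
  have H : (fun j => G (chi j) (a *: x + y)) @ \oo --> a * g x + g y.
    have -> : (fun j => G (chi j) (a *: x + y)) = (fun j => a * G (chi j) x + G (chi j) y).
      by apply/funext => j; exact: Gl.
    apply: cvgD; last exact: gc.
    exact: (cvgM (cvg_cst a) (gc x)).
  by rewrite /g (cvg_lim _ H).
have gB x : `|g x| <= B * `|x|.
  rewrite leNgt; apply/negP => hlt.
  have /cvg_epsP /(_ (`|g x| - B * `|x|)) := gc x.
  rewrite subr_gt0 => /(_ hlt) [N HN].
  have := HN N (leqnn N); have := GB (chi N) x.
  have := ler_normD (g x - G (chi N) x) (G (chi N) x); rewrite subrK.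
  lra.
have Hdual n : in_dual (G (chi n)) by split; [exact: Gl | exists B; exact: GB].
have gdual : in_dual g by split; [exact: gl | exists B; exact: gB].
have [h [hd hw]] := GX (fun n => G (chi n)) Hdual (ex_intro _ g (conj gdual gc)).
have dualJ (K : X -> R) : in_dual K -> in_dual (fun m => K (J m)).
  move=> [Kl [C KC]]; split.
    by move=> a x y; rewrite linearP; exact: Kl.
  by exists C => z; rewrite -J_isometry; exact: KC.
have fbJ (K : X -> R) C : fbounded K C -> fbounded (fun m => K (J m)) C.
  by move=> KC z; rewrite -J_isometry; exact: KC.
pose Psi (K : X -> R) := Phi (fun m => K (J m)).
have PsiB : in_bidual Psi.
  case: PhiB => PL [C HC]; split.
    by move=> a f1 f2 d1 d2; exact: PL (dualJ _ d1) (dualJ _ d2).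
  by exists C => K' C' d c0 fb; exact: HC (dualJ _ d) c0 (fbJ _ _ fb).
have evB m : in_bidual (fun K : X -> R => K (J m)).
  split; first by move=> a f1 f2 d1 d2.
  exists `|m| => K' C' [_ _] c0 fb.
  by rewrite mulrC -J_isometry; exact: fb.
have hJ m : h (J m) = f m.
  have c1 := hw _ (evB m).
  have E1 := cvg_lim (@Rhausdorff R) c1.
  have E2 := cvg_lim (@Rhausdorff R) (Fchi m).
  rewrite -E1 -E2; congr (limn _); apply/funext => n /=; by rewrite GJ.
have cv : (fun n => Phi (F (chi n))) @ \oo --> Phi f.
  have := hw _ PsiB; rewrite /Psi.
  have -> : (fun m => h (J m)) = f by apply/funext => m; exact: hJ.
  have -> : (fun n => Phi (fun m => G (chi n) (J m))) = (fun n => Phi (F (chi n))).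
    by apply/funext => n; congr Phi; apply/funext => m; exact: GJ.
  by [].
have /cvg_epsP /(_ e e0) [N HN] := cv.
have := HN N (leqnn N); have := phiB (psi N).
rewrite /chi; lra.
Qed.
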